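(* For $d\ge3$ and each $s\in\{0,1,2\}$, the maximal number of pairwise disjoint lines in the family $\mathcal{L}^s$ is $\mathfrak{s}(\mathcal{L}^s)=d$. In particular, the maximal number $\mathfrak{s}({\rm F}_d)$ of pairwise disjoint lines on ${\rm F}_d$ satisfies $\mathfrak{s}({\rm F}_d)\le 3d$.
   Context: ${\rm F}_d\subset\mathbb{P}^3(\mathbb{C})$ is the surface $x^d-y^d-z^d+w^d=0$. Fix a primitive $d$-th root of unity $\eta$ and $v\in\mathbb{C}$ with $v^d=-1$. For $k,i\in\{0,\dots,d-1\}$ define $L^0_{k,i}:\{y=\eta^i x,\ w=\eta^k z\}$, $L^1_{k,i}:\{x=\eta^{k+i}z,\ y=\eta^i w\}$, $L^2_{k,i}:\{x=v\eta^i w,\ y=v\eta^{k+i}z\}$, and $\mathcal{L}^s=\{L^s_{k,i}\}_{k,i}$. The lines on ${\rm F}_d$ are exactly the elements of $\mathcal{L}^0\cup\mathcal{L}^1\cup\mathcal{L}^2$. For a set $X$ of lines (or a surface), $\mathfrak{s}(X)$ denotes the maximal number of pairwise disjoint lines in $X$. *)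

(* Defs.v *)
From HB Require Import structures.
From mathcomp Require Import all_boot all_order all_algebra all_field.
From mathcomp Require Import boolp.
Set Implicit Arguments. Unset Strict Implicit. Unset Printing Implicit Defensive.
Import GRing.Theory Num.Theory.
Local Open Scope ring_scope.

(* A line of P^3(C), given as the set of homogeneous coordinate vectors
   (x,y,z,w) in C^4 satisfying its defining linear equations. *)
Definition line := algC -> algC -> algC -> algC -> Prop.

(* Two lines of P^3 are disjoint iff the only common solution of their
   equations is the zero vector (i.e. no common projective point). *)
Definition disjoint_lines (L M : line) : Prop :=
  forall x y z w, L x y z w -> M x y z w ->
    x = 0 /\ y = 0 /\ z = 0 /\ w = 0.

(* The lines L^s_{k,i} on the Fermat surface x^d - y^d - z^d + w^d = 0,
   with eta a primitive d-th root of unity and v^d = -1. *)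
Definition Lsk (eta v : algC) (s : 'I_3) (k i : nat) : line :=
  fun x y z w =>
  match val s with
  | 0%N => y = eta ^+ i * x /\ w = eta ^+ k * z
  | 1%N => x = eta ^+ (k + i) * z /\ y = eta ^+ i * w
  | _ => x = v * eta ^+ i * w /\ y = v * eta ^+ (k + i) * z
  end.

Definition Lfam (d : nat) (eta v : algC) (s : 'I_3) : 'I_d * 'I_d -> line :=
  fun p => Lsk eta v s p.1 p.2.

Definition Lall (d : nat) (eta v : algC) : 'I_3 * ('I_d * 'I_d) -> line :=
  fun p => Lsk eta v p.1 p.2.1 p.2.2.

Definition pairwise_disjoint (I : finType) (F : I -> line) (S : {set I}) : Prop :=
  forall a b, a \in S -> b \in S -> a != b -> disjoint_lines (F a) (F b).

Definition frak_s (I : finType) (F : I -> line) : nat :=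
  \max_(S : {set I} | `[< pairwise_disjoint F S >]) #|S|.

Arguments Lfam : clear implicits.
Arguments Lall : clear implicits.

(* Main.v *)
Require Import Defs.
From HB Require Import structures.
From mathcomp Require Import all_boot all_order all_algebra all_field.
From mathcomp Require Import boolp.
Import GRing.Theory Num.Theory.
Local Open Scope ring_scope.

Lemma eta_neq (d : nat) (eta : algC) (i j : nat) : d.-primitive_root eta ->
  (i < d)%N -> (j < d)%N -> i != j -> eta ^+ i != eta ^+ j.
Proof.
move=> He hi hj nij; rewrite (eq_prim_root_expr He) !modn_small //.
Qed.

Lemma mul_cancel0 (a b t : algC) : a != b -> a * t = b * t -> t = 0.
Proof.
move=> ab /eqP; rewrite -subr_eq0 -mulrBl mulf_eq0 subr_eq0 (negbTE ab) /=.
by move/eqP.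
Qed.

Lemma common_pt (eta v : algC) (s : 'I_3) (i : nat) :
  exists x y z w, ~ (x = 0 /\ y = 0 /\ z = 0 /\ w = 0) /\
    forall k, Lsk eta v s k i x y z w.
Proof.
case: s => [[|[|[|s]]] Hs] //.
- exists 1, (eta ^+ i), 0, 0; split; first by case=> /eqP; rewrite oner_eq0.
  by move=> k; rewrite /Lsk /= mulr1 mulr0.
- exists 0, (eta ^+ i), 0, 1; split; first by case=> _ [_ [_ /eqP]]; rewrite oner_eq0.
  by move=> k; rewrite /Lsk /= mulr1 mulr0.
- exists (v * eta ^+ i), 0, 0, 1; split; first by case=> _ [_ [_ /eqP]]; rewrite oner_eq0.
  by move=> k; rewrite /Lsk /= mulr1 mulr0.
Qed.

Lemma frak_le (I J : finType) (F : I -> line) (g : I -> J) :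
  (forall a b, g a = g b -> a != b -> ~ disjoint_lines (F a) (F b)) ->
  (frak_s F <= #|J|)%N.
Proof.
move=> H; apply/bigmax_leqP => S /asboolP HS.
rewrite -(card_in_imset (f:=g)) ?max_card //.
move=> a b aS bS gab; apply/eqP; apply/negPn/negP => nab.
exact: (H a b gab nab (HS a b aS bS nab)).
Qed.

Lemma not_disj (eta v : algC) s k k' i :
  ~ disjoint_lines (Lsk eta v s k i) (Lsk eta v s k' i).
Proof.
move=> D; have [x [y [z [w [nz P]]]]] := common_pt eta v s i.
exact: nz (D _ _ _ _ (P k) (P k')).
Qed.

Theorem corollary2p1 (d : nat) (eta v : algC) :
  (3 <= d)%N -> d.-primitive_root eta -> v ^+ d = -1 ->
  (forall s : 'I_3, frak_s (Lfam d eta v s) = d :> nat) /\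
  (frak_s (Lall d eta v) <= 3 * d)%N.
Proof.
move=> d3 He Hv.
have d0 : (0 < d)%N by apply: leq_trans d3.
have v0 : v != 0.
  apply/negP => /eqP v0; move: Hv; rewrite v0 expr0n.
  case: d d3 {He d0} => // n _ /eqP; by rewrite /= eq_sym oppr_eq0 oner_eq0.
split; last first.
  have := @frak_le _ _ (Lall d eta v) (fun p => (p.1, p.2.2)).
  rewrite card_prod !card_ord; apply.
  move=> [s [k i]] [s' [k' i']] /= [<- <-] _; exact: not_disj.
move=> s; apply/eqP; rewrite eqn_leq; apply/andP; split.
  have := @frak_le _ _ (Lfam d eta v s) (fun p => p.2).
  rewrite card_ord; apply.
  move=> [k i] [k' i'] /= <- _; exact: not_disj.
pose z0 : 'I_d := Ordinal d0.
pose f := fun i : 'I_d => (if val s == 0%N then i else z0, i).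
have finj : injective f by move=> i j [].
rewrite -{1}(card_ord d) -(card_imset _ finj).
rewrite /frak_s; apply: (leq_bigmax_cond (F := fun S : {set _} => #|S|)).
apply/asboolP => a b /imsetP [i _ ->] /imsetP [j _ ->] nab.
have nij : val i != val j by apply: contraNneq nab => /val_inj ->.
have eij := @eta_neq d eta i j He (ltn_ord i) (ltn_ord j) nij.
rewrite /Lfam /= /f /=.
case: s {f finj nab} => [[|[|[|s]]] Hs] // x y z w; rewrite /Lsk /=.
- move=> [y1 w1] [y2 w2].
  have x0 : x = 0 by apply: (mul_cancel0 _ _ _ eij); rewrite -y1 -y2.
  have z0' : z = 0 by apply: (mul_cancel0 _ _ _ eij); rewrite -w1 -w2.
  rewrite y1 w1 x0 z0' !mulr0; do !split.
- rewrite !add0n => [[x1 y1] [x2 y2]].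
  have z0' : z = 0 by apply: (mul_cancel0 _ _ _ eij); rewrite -x1 -x2.
  have w0 : w = 0 by apply: (mul_cancel0 _ _ _ eij); rewrite -y1 -y2.
  rewrite x1 y1 z0' w0 !mulr0; do !split.
- rewrite !add0n => [[x1 y1] [x2 y2]].
  have e' : v * eta ^+ i != v * eta ^+ j by rewrite (inj_eq (mulfI v0)); exact: eij.
  have w0 : w = 0 by apply: (mul_cancel0 _ _ _ e'); rewrite -x1 -x2.
  have z0' : z = 0 by apply: (mul_cancel0 _ _ _ e'); rewrite -y1 -y2.
  rewrite x1 y1 z0' w0 !mulr0; do !split.
Qed.
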